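(* Let $A\in\mathbb{C}^{m\times n}$, $B\in\mathbb{C}^{n\times p}$, $C\in\mathbb{C}^{p\times q}$ and $M=ABC$. Then each of the following sets is contained in $\{M^{(1,2)}\}$: $\{(A^{(1,2)}M)^{(1,2)}A^{(1,2)}\}$, $\{C^{(1,2)}(MC^{(1,2)})^{(1,2)}\}$, $\{(A^{*}M)^{(1,2)}A^{*}\}$, $\{C^{*}(MC^{*})^{(1,2)}\}$, $\{(AA^{*}M)^{(1,2)}AA^{*}\}$, $\{C^{*}C(MC^{*}C)^{(1,2)}\}$, $\{C^{(1,2)}(A^{(1,2)}MC^{(1,2)})^{(1,2)}A^{(1,2)}\}$, $\{C^{*}(A^{*}MC^{*})^{(1,2)}A^{*}\}$, $\{[(AB)^{(1,2)}M]^{(1,2)}(AB)^{(1,2)}\}$, $\{(BC)^{(1,2)}[M(BC)^{(1,2)}]^{(1,2)}\}$, $\{[(AB)^{*}M]^{(1,2)}(AB)^{*}\}$, $\{(BC)^{*}[M(BC)^{*}]^{(1,2)}\}$, $\{[(ABB^{(1,2)})^{(1,2)}M]^{(1,2)}(ABB^{(1,2)})^{(1,2)}\}$, $\{(B^{(1,2)}BC)^{(1,2)}[M(B^{(1,2)}BC)^{(1,2)}]^{(1,2)}\}$, $\{[(ABB^{*})^{(1,2)}M]^{(1,2)}(ABB^{*})^{(1,2)}\}$, $\{(B^{*}BC)^{(1,2)}[M(B^{*}BC)^{(1,2)}]^{(1,2)}\}$, $\{C^{*}C(AA^{*}MC^{*}C)^{(1,2)}AA^{*}\}$, $\{(BC)^{(1,2)}[(AB)^{(1,2)}M(BC)^{(1,2)}]^{(1,2)}(AB)^{(1,2)}\}$,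 $\{(BC)^{*}[(AB)^{*}M(BC)^{*}]^{(1,2)}(AB)^{*}\}$, $\{(B^{(1,2)}BC)^{(1,2)}[(ABB^{(1,2)})^{(1,2)}M(B^{(1,2)}BC)^{(1,2)}]^{(1,2)}(ABB^{(1,2)})^{(1,2)}\}$, $\{(B^{(1,2)}BC)^{*}[(ABB^{(1,2)})^{*}M(B^{(1,2)}BC)^{*}]^{(1,2)}(ABB^{(1,2)})^{*}\}$, $\{(B^{*}BC)^{(1,2)}[(ABB^{*})^{(1,2)}M(B^{*}BC)^{(1,2)}]^{(1,2)}(ABB^{*})^{(1,2)}\}$, $\{(B^{*}BC)^{*}[(ABB^{*})^{*}M(B^{*}BC)^{*}]^{(1,2)}(ABB^{*})^{*}\}$.
   Context: For a complex matrix $X$, $X^*$ is its conjugate transpose. For $X\in\mathbb{C}^{p\times q}$, a matrix $G\in\mathbb{C}^{q\times p}$ is called an $\{i,\ldots,j\}$-generalized inverse of $X$ (written $X^{(i,\ldots,j)}$) if it satisfies the equations numbered $i,\ldots,j$ among the four Penrose equations (i) $XGX=X$, (ii) $GXG=G$, (iii) $(XG)^*=XG$, (iv) $(GX)^*=GX$; $\{X^{(i,\ldots,j)}\}$ denotes the set of all such $G$. For a matrix expression involving generalized inverses, $\{\cdot\}$ denotes the set of all values of the expression as each generalized inverse occurring in it ranges over all admissible choices; repeated occurrences of the same symbol (e.g. $(AB)^{(1,2)}$ appearing twice) denote one and the same choice, and a generalized inverse of a matrix that itself contains a chosen generalized inverse is taken with respect to that chosen matrix. *)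

(* Defs.v *)
(* Complex matrices are modelled over an arbitrary
   numClosedFieldType R (e.g. algC, or any model of C), with Num.conj as
   complex conjugation. *)
From HB Require Import structures.
From mathcomp Require Import all_boot all_order all_algebra.
Set Implicit Arguments. Unset Strict Implicit. Unset Printing Implicit Defensive.
Import Order.TTheory GRing.Theory Num.Theory.
Local Open Scope ring_scope.

Definition ctr (R : numClosedFieldType) (m n : nat) (X : 'M[R]_(m, n)) : 'M[R]_(n, m) :=
  (map_mx Num.conj X)^T.

Definition is_inv12 (R : numClosedFieldType) (m n : nat)
  (X : 'M[R]_(m, n)) (G : 'M[R]_(n, m)) : Prop :=
  X *m G *m X = X /\ G *m X *m G = G.

(* Main.v *)
Require Import Defs.
From HB Require Import structures.
From mathcomp Require Import all_boot all_order all_algebra zify.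
Import Order.TTheory GRing.Theory Num.Theory.
Local Open Scope ring_scope.
Set Implicit Arguments. Unset Strict Implicit. Unset Printing Implicit Defensive.

Section Aux.
Variable R : numClosedFieldType.

Lemma ctrK m n (A : 'M[R]_(m, n)) : ctr (ctr A) = A.
Proof. by apply/matrixP => i j; rewrite /ctr !mxE conjCK. Qed.

Lemma ctrM m n p (A : 'M[R]_(m, n)) (B : 'M[R]_(n, p)) :
  ctr (A *m B) = ctr B *m ctr A.
Proof. by rewrite /ctr map_mxM trmx_mul. Qed.

Lemma mulctr_eq0 m n (Y : 'M[R]_(m, n)) : Y *m ctr Y = 0 -> Y = 0.
Proof.
move=> h; apply/matrixP => i j; rewrite mxE.
have /matrixP/(_ i i) := h; rewrite !mxE => /eqP.
under eq_bigr => k _ do rewrite /ctr !mxE.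
rewrite psumr_eq0; last by move=> k _; apply: mul_conjC_ge0.
by move=> /allP/(_ j (mem_index_enum _)) /=; rewrite mul_conjC_eq0 => /eqP.
Qed.

Lemma F1 m n (A : 'M[R]_(m, n)) : exists S, A = S *m (ctr A *m A).
Proof.
apply/submxP.
have sub : (ctr A *m A <= A)%MS by apply: submxMl.
have [_ <-] := mxrank_leqif_sup sub.
apply/eqP/anti_leq; rewrite mxrankS //=.
set K := kermx (ctr A *m A)^T.
have hK : (K <= kermx A^T)%MS.
  apply/sub_kermxP; apply: mulctr_eq0.
  have e : K *m (ctr A *m A)^T = 0 by apply: mulmx_ker.
  have cT : ctr A^T = (ctr A)^T by apply/matrixP => i j; rewrite /ctr !mxE.
  rewrite ctrM cT mulmxA.
  rewrite trmx_mul mulmxA in e.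
  by rewrite e mul0mx.
have := mxrankS hK; rewrite !mxrank_ker !mxrank_tr.
have := rank_leq_col A; have := rank_leq_col (ctr A *m A).
move=> h1 h2 h3; lia.
Qed.

Lemma Lstar m n (A : 'M[R]_(m, n)) : exists S, A = S *m ctr A *m A.
Proof. by have [S hS] := F1 A; exists S; rewrite -mulmxA. Qed.

Lemma Rstar m n (C : 'M[R]_(m, n)) : exists T, C = C *m ctr C *m T.
Proof.
have [S hS] := F1 (ctr C); exists (ctr S).
by have := congr1 (@ctr _ _ _) hS; rewrite !ctrM !ctrK.
Qed.

Lemma LAAs m n (A : 'M[R]_(m, n)) : exists S, A = S *m (A *m ctr A) *m A.
Proof.
have [S hS] := Lstar A; have [S1 hS1] := Lstar (ctr A).
rewrite ctrK in hS1.
exists (S *m S1); transitivity (S *m ctr A *m A); first exact hS.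
by rewrite {1}hS1 !mulmxA.
Qed.

Lemma RCsC m n (C : 'M[R]_(m, n)) : exists T, C = C *m (ctr C *m C) *m T.
Proof.
have [T hT] := Rstar C; have [T1 hT1] := Rstar (ctr C).
rewrite ctrK in hT1.
exists (T1 *m T); transitivity (C *m ctr C *m T); first exact hT.
by rewrite {1}hT1 !mulmxA.
Qed.

Lemma lemL a b c d (X : 'M[R]_(a, b)) (W : 'M_(b, c)) (S : 'M_(a, d)) V :
  X = S *m V *m X -> X *m W = S *m V *m (X *m W).
Proof. by move=> h; rewrite mulmxA -h. Qed.

Lemma lemR a b c d (X : 'M[R]_(a, b)) (W : 'M_(c, a)) (U : 'M_(b, d)) T :
  X = X *m U *m T -> W *m X = W *m X *m U *m T.
Proof. by move=> h; rewrite -!mulmxA (mulmxA X) -h. Qed.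

Lemma absorb a b c (X : 'M[R]_(a, b)) (Y : 'M_(b, a)) (W : 'M_(c, a)) :
  X *m Y *m X = X -> W *m X *m Y *m X = W *m X.
Proof. by move=> h; rewrite -!mulmxA (mulmxA X) h. Qed.

Lemma core m q a b (M : 'M[R]_(m, q)) (V : 'M_(a, m)) (U : 'M_(q, b))
  (X : 'M_(b, a)) N G :
  (exists S : 'M_(m, a), M = S *m V *m M) ->
  (exists T : 'M_(b, q), M = M *m U *m T) ->
  N = V *m M *m U -> G = U *m X *m V -> is_inv12 N X -> is_inv12 M G.
Proof.
move=> [S EL] [T ER] -> -> [h1 h2]; split.
  have -> : M *m (U *m X *m V) *m M =
            (S *m V *m M) *m (U *m X *m V) *m (M *m U *m T)
    by rewrite -EL -ER.
  have -> : S *m V *m M *m (U *m X *m V) *m (M *m U *m T) =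
            S *m (V *m M *m U *m X *m (V *m M *m U)) *m T
    by rewrite !mulmxA.
  rewrite h1.
  have -> : S *m (V *m M *m U) *m T = S *m V *m (M *m U *m T)
    by rewrite !mulmxA.
  by rewrite -ER -EL.
have -> : U *m X *m V *m M *m (U *m X *m V) =
          U *m (X *m (V *m M *m U) *m X) *m V by rewrite !mulmxA.
by rewrite h2.
Qed.

End Aux.

Theorem theorem3p3 (R : numClosedFieldType) (m n p q : nat)
  (A : 'M[R]_(m, n)) (B : 'M[R]_(n, p)) (C : 'M[R]_(p, q)) :
  let M := A *m B *m C in
  (* 1: (A^(1,2) M)^(1,2) A^(1,2)  *)
  (forall (Ag : 'M_(n, m)) (X : 'M_(q, n)),
      is_inv12 A Ag -> is_inv12 (Ag *m M) X -> is_inv12 M (X *m Ag)) /\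
  (* 2: C^(1,2) (M C^(1,2))^(1,2)  *)
  (forall (Cg : 'M_(q, p)) (X : 'M_(p, m)),
      is_inv12 C Cg -> is_inv12 (M *m Cg) X -> is_inv12 M (Cg *m X)) /\
  (* 3: (A^H M)^(1,2) A^H  *)
  (forall (X : 'M_(q, n)),
      is_inv12 (ctr A *m M) X -> is_inv12 M (X *m ctr A)) /\
  (* 4: C^H (M C^H)^(1,2)  *)
  (forall (X : 'M_(p, m)),
      is_inv12 (M *m ctr C) X -> is_inv12 M (ctr C *m X)) /\
  (* 5: (A A^H M)^(1,2) A A^H  *)
  (forall (X : 'M_(q, m)),
      is_inv12 (A *m ctr A *m M) X -> is_inv12 M (X *m (A *m ctr A))) /\
  (* 6: C^H C (M C^H C)^(1,2)  *)
  (forall (X : 'M_(q, m)),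
      is_inv12 (M *m ctr C *m C) X -> is_inv12 M (ctr C *m C *m X)) /\
  (* 7: C^(1,2) (A^(1,2) M C^(1,2))^(1,2) A^(1,2)  *)
  (forall (Ag : 'M_(n, m)) (Cg : 'M_(q, p)) (X : 'M_(p, n)),
      is_inv12 A Ag -> is_inv12 C Cg -> is_inv12 (Ag *m M *m Cg) X ->
      is_inv12 M (Cg *m X *m Ag)) /\
  (* 8: C^H (A^H M C^H)^(1,2) A^H  *)
  (forall (X : 'M_(p, n)),
      is_inv12 (ctr A *m M *m ctr C) X -> is_inv12 M (ctr C *m X *m ctr A)) /\
  (* 9: [(AB)^(1,2) M]^(1,2) (AB)^(1,2)  *)
  (forall (ABg : 'M_(p, m)) (X : 'M_(q, p)),
      is_inv12 (A *m B) ABg -> is_inv12 (ABg *m M) X ->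
      is_inv12 M (X *m ABg)) /\
  (* 10: (BC)^(1,2) [M (BC)^(1,2)]^(1,2)  *)
  (forall (BCg : 'M_(q, n)) (X : 'M_(n, m)),
      is_inv12 (B *m C) BCg -> is_inv12 (M *m BCg) X ->
      is_inv12 M (BCg *m X)) /\
  (* 11: [(AB)^H M]^(1,2) (AB)^H  *)
  (forall (X : 'M_(q, p)),
      is_inv12 (ctr (A *m B) *m M) X -> is_inv12 M (X *m ctr (A *m B))) /\
  (* 12: (BC)^H [M (BC)^H]^(1,2)  *)
  (forall (X : 'M_(n, m)),
      is_inv12 (M *m ctr (B *m C)) X -> is_inv12 M (ctr (B *m C) *m X)) /\
  (* 13: [(A B B^(1,2))^(1,2) M]^(1,2) (A B B^(1,2))^(1,2)  *)
  (forall (Bg : 'M_(p, n)) (Y : 'M_(n, m)) (X : 'M_(q, n)),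
      is_inv12 B Bg -> is_inv12 (A *m B *m Bg) Y -> is_inv12 (Y *m M) X ->
      is_inv12 M (X *m Y)) /\
  (* 14: (B^(1,2) B C)^(1,2) [M (B^(1,2) B C)^(1,2)]^(1,2)  *)
  (forall (Bg : 'M_(p, n)) (Z : 'M_(q, p)) (X : 'M_(p, m)),
      is_inv12 B Bg -> is_inv12 (Bg *m B *m C) Z -> is_inv12 (M *m Z) X ->
      is_inv12 M (Z *m X)) /\
  (* 15: [(A B B^H )^(1,2) M]^(1,2) (A B B^H )^(1,2)  *)
  (forall (Y : 'M_(n, m)) (X : 'M_(q, n)),
      is_inv12 (A *m B *m ctr B) Y -> is_inv12 (Y *m M) X ->
      is_inv12 M (X *m Y)) /\
  (* 16: (B^H B C)^(1,2) [M (B^H B C)^(1,2)]^(1,2)  *)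
  (forall (Z : 'M_(q, p)) (X : 'M_(p, m)),
      is_inv12 (ctr B *m B *m C) Z -> is_inv12 (M *m Z) X ->
      is_inv12 M (Z *m X)) /\
  (* 17: C^H C (A A^H M C^H C)^(1,2) A A^H  *)
  (forall (X : 'M_(q, m)),
      is_inv12 (A *m ctr A *m M *m ctr C *m C) X ->
      is_inv12 M (ctr C *m C *m X *m (A *m ctr A))) /\
  (* 18: (BC)^(1,2) [(AB)^(1,2) M (BC)^(1,2)]^(1,2) (AB)^(1,2)  *)
  (forall (ABg : 'M_(p, m)) (BCg : 'M_(q, n)) (X : 'M_(n, p)),
      is_inv12 (A *m B) ABg -> is_inv12 (B *m C) BCg ->
      is_inv12 (ABg *m M *m BCg) X ->
      is_inv12 M (BCg *m X *m ABg)) /\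
  (* 19: (BC)^H [(AB)^H M (BC)^H]^(1,2) (AB)^H  *)
  (forall (X : 'M_(n, p)),
      is_inv12 (ctr (A *m B) *m M *m ctr (B *m C)) X ->
      is_inv12 M (ctr (B *m C) *m X *m ctr (A *m B))) /\
  (* 20: (B^(1,2)BC)^(1,2) [(ABB^(1,2))^(1,2) M (B^(1,2)BC)^(1,2)]^(1,2) (ABB^(1,2))^(1,2)  *)
  (forall (Bg : 'M_(p, n)) (Y : 'M_(n, m)) (Z : 'M_(q, p)) (X : 'M_(p, n)),
      is_inv12 B Bg -> is_inv12 (A *m B *m Bg) Y -> is_inv12 (Bg *m B *m C) Z ->
      is_inv12 (Y *m M *m Z) X ->
      is_inv12 M (Z *m X *m Y)) /\
  (* 21: (B^(1,2)BC)^H [(ABB^(1,2))^H M (B^(1,2)BC)^H]^(1,2) (ABB^(1,2))^H  *)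
  (forall (Bg : 'M_(p, n)) (X : 'M_(p, n)),
      is_inv12 B Bg ->
      is_inv12 (ctr (A *m B *m Bg) *m M *m ctr (Bg *m B *m C)) X ->
      is_inv12 M (ctr (Bg *m B *m C) *m X *m ctr (A *m B *m Bg))) /\
  (* 22: (B^HBC)^(1,2) [(ABB^H )^(1,2) M (B^HBC)^(1,2)]^(1,2) (ABB^H )^(1,2)  *)
  (forall (Y : 'M_(n, m)) (Z : 'M_(q, p)) (X : 'M_(p, n)),
      is_inv12 (A *m B *m ctr B) Y -> is_inv12 (ctr B *m B *m C) Z ->
      is_inv12 (Y *m M *m Z) X ->
      is_inv12 M (Z *m X *m Y)) /\
  (* 23: (B^HBC)^H [(ABB^H )^H M (B^HBC)^H]^(1,2) (ABB^H )^H  *)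
  (forall (X : 'M_(p, n)),
      is_inv12 (ctr (A *m B *m ctr B) *m M *m ctr (ctr B *m B *m C)) X ->
      is_inv12 M (ctr (ctr B *m B *m C) *m X *m ctr (A *m B *m ctr B))).
Proof.
cbv zeta.
have T1 : forall a b (Z : 'M[R]_(a, b)), exists T : 'M_(b, b), Z = Z *m 1%:M *m T.
  by move=> a b Z; exists 1%:M; rewrite !mulmx1.
have S1 : forall a b (Z : 'M[R]_(a, b)), exists S : 'M_(a, a), Z = S *m 1%:M *m Z.
  by move=> a b Z; exists 1%:M; rewrite !mul1mx.
repeat match goal with |- _ /\ _ => split end.
- move=> Ag X [hA _] hX; apply: (core (V:=Ag) (U:=1%:M) _ _ _ _ hX);
    [ by exists A; apply: lemL; apply: lemL; rewrite hA
    | exact: T1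
    | by rewrite ?mul1mx ?mulmx1 ?mulmxA | by rewrite ?mul1mx ?mulmx1 ?mulmxA ].
- move=> Cg X [hC _] hX; apply: (core (V:=1%:M) (U:=Cg) _ _ _ _ hX);
    [ exact: S1
    | by exists C; apply: lemR; rewrite hC
    | by rewrite ?mul1mx ?mulmx1 ?mulmxA | by rewrite ?mul1mx ?mulmx1 ?mulmxA ].
- move=> X hX; have [S hS] := Lstar A.
  apply: (core (V:=ctr A) (U:=1%:M) _ _ _ _ hX);
    [ by exists S; apply: lemL; apply: lemL
    | exact: T1
    | by rewrite ?mul1mx ?mulmx1 ?mulmxA | by rewrite ?mul1mx ?mulmx1 ?mulmxA ].
- move=> X hX; have [T hT] := Rstar C.
  apply: (core (V:=1%:M) (U:=ctr C) _ _ _ _ hX);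
    [ exact: S1
    | by exists T; apply: lemR
    | by rewrite ?mul1mx ?mulmx1 ?mulmxA | by rewrite ?mul1mx ?mulmx1 ?mulmxA ].
- move=> X hX; have [S hS] := LAAs A.
  apply: (core (V:=A *m ctr A) (U:=1%:M) _ _ _ _ hX);
    [ by exists S; apply: lemL; apply: lemL
    | exact: T1
    | by rewrite ?mul1mx ?mulmx1 ?mulmxA | by rewrite ?mul1mx ?mulmx1 ?mulmxA ].
- move=> X hX; have [T hT] := RCsC C.
  apply: (core (V:=1%:M) (U:=ctr C *m C) _ _ _ _ hX);
    [ exact: S1
    | by exists T; apply: lemR
    | by rewrite ?mul1mx ?mulmx1 ?mulmxA | by rewrite ?mul1mx ?mulmx1 ?mulmxA ].
- move=> Ag Cg X [hA _] [hC _] hX.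
  apply: (core (V:=Ag) (U:=Cg) _ _ _ _ hX);
    [ by exists A; apply: lemL; apply: lemL; rewrite hA
    | by exists C; apply: lemR; rewrite hC
    | by rewrite ?mul1mx ?mulmx1 ?mulmxA | by rewrite ?mul1mx ?mulmx1 ?mulmxA ].
- move=> X hX; have [S hS] := Lstar A; have [T hT] := Rstar C.
  apply: (core (V:=ctr A) (U:=ctr C) _ _ _ _ hX);
    [ by exists S; apply: lemL; apply: lemL
    | by exists T; apply: lemR
    | by rewrite ?mul1mx ?mulmx1 ?mulmxA | by rewrite ?mul1mx ?mulmx1 ?mulmxA ].
- move=> ABg X [hAB _] hX.
  apply: (core (V:=ABg) (U:=1%:M) _ _ _ _ hX);
    [ by exists (A *m B); apply: lemL; rewrite hAB
    | exact: T1
    | by rewrite ?mul1mx ?mulmx1 ?mulmxA | by rewrite ?mul1mx ?mulmx1 ?mulmxA ].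
- move=> BCg X [hBC _] hX.
  apply: (core (V:=1%:M) (U:=BCg) _ _ _ _ hX);
    [ exact: S1
    | by exists (B *m C); rewrite -(mulmxA A B C); apply: lemR; rewrite hBC
    | by rewrite ?mul1mx ?mulmx1 ?mulmxA | by rewrite ?mul1mx ?mulmx1 ?mulmxA ].
- move=> X hX; have [S hS] := Lstar (A *m B).
  apply: (core (V:=ctr (A *m B)) (U:=1%:M) _ _ _ _ hX);
    [ by exists S; apply: lemL
    | exact: T1
    | by rewrite ?mul1mx ?mulmx1 ?mulmxA | by rewrite ?mul1mx ?mulmx1 ?mulmxA ].
- move=> X hX; have [T hT] := Rstar (B *m C).
  apply: (core (V:=1%:M) (U:=ctr (B *m C)) _ _ _ _ hX);
    [ exact: S1
    | by exists T; rewrite -(mulmxA A B C); apply: lemR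
    | by rewrite ?mul1mx ?mulmx1 ?mulmxA | by rewrite ?mul1mx ?mulmx1 ?mulmxA ].
- move=> Bg Y X [hB _] [hY _] hX.
  have eM : A *m B *m C = A *m B *m Bg *m (B *m C)
    by rewrite !mulmxA (absorb _ hB).
  apply: (core (V:=Y) (U:=1%:M) _ _ _ _ hX);
    [ by exists (A *m B *m Bg); rewrite eM; apply: lemL; rewrite hY
    | exact: T1
    | by rewrite ?mul1mx ?mulmx1 ?mulmxA | by rewrite ?mul1mx ?mulmx1 ?mulmxA ].
- move=> Bg Z X [hB _] [hZ _] hX.
  have eM : A *m B *m C = A *m B *m (Bg *m B *m C)
    by rewrite !mulmxA (absorb _ hB).
  apply: (core (V:=1%:M) (U:=Z) _ _ _ _ hX);
    [ exact: S1
    | by exists (Bg *m B *m C); rewrite eM; apply: lemR; rewrite hZ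
    | by rewrite ?mul1mx ?mulmx1 ?mulmxA | by rewrite ?mul1mx ?mulmx1 ?mulmxA ].
- move=> Y X [hY _] hX; have [T0 hT0] := Rstar B.
  have eM : A *m B *m C = A *m B *m ctr B *m (T0 *m C)
    by rewrite {1}hT0 !mulmxA.
  apply: (core (V:=Y) (U:=1%:M) _ _ _ _ hX);
    [ by exists (A *m B *m ctr B); rewrite eM; apply: lemL; rewrite hY
    | exact: T1
    | by rewrite ?mul1mx ?mulmx1 ?mulmxA | by rewrite ?mul1mx ?mulmx1 ?mulmxA ].
- move=> Z X [hZ _] hX; have [S0 hS0] := Lstar B.
  have eM : A *m B *m C = A *m S0 *m (ctr B *m B *m C)
    by rewrite {1}hS0 !mulmxA.
  apply: (core (V:=1%:M) (U:=Z) _ _ _ _ hX);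
    [ exact: S1
    | by exists (ctr B *m B *m C); rewrite eM; apply: lemR; rewrite hZ
    | by rewrite ?mul1mx ?mulmx1 ?mulmxA | by rewrite ?mul1mx ?mulmx1 ?mulmxA ].
- move=> X hX; have [S hS] := LAAs A; have [T hT] := RCsC C.
  apply: (core (V:=A *m ctr A) (U:=ctr C *m C) _ _ _ _ hX);
    [ by exists S; apply: lemL; apply: lemL
    | by exists T; apply: lemR
    | by rewrite ?mul1mx ?mulmx1 ?mulmxA | by rewrite ?mul1mx ?mulmx1 ?mulmxA ].
- move=> ABg BCg X [hAB _] [hBC _] hX.
  apply: (core (V:=ABg) (U:=BCg) _ _ _ _ hX);
    [ by exists (A *m B); apply: lemL; rewrite hAB
    | by exists (B *m C); rewrite -(mulmxA A B C); apply: lemR; rewrite hBC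
    | by rewrite ?mul1mx ?mulmx1 ?mulmxA | by rewrite ?mul1mx ?mulmx1 ?mulmxA ].
- move=> X hX; have [S hS] := Lstar (A *m B); have [T hT] := Rstar (B *m C).
  apply: (core (V:=ctr (A *m B)) (U:=ctr (B *m C)) _ _ _ _ hX);
    [ by exists S; apply: lemL
    | by exists T; rewrite -(mulmxA A B C); apply: lemR
    | by rewrite ?mul1mx ?mulmx1 ?mulmxA | by rewrite ?mul1mx ?mulmx1 ?mulmxA ].
- move=> Bg Y Z X [hB _] [hY _] [hZ _] hX.
  have eM : A *m B *m C = A *m B *m Bg *m (B *m C)
    by rewrite !mulmxA (absorb _ hB).
  have eM' : A *m B *m C = A *m B *m (Bg *m B *m C)
    by rewrite !mulmxA (absorb _ hB).
  apply: (core (V:=Y) (U:=Z) _ _ _ _ hX);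
    [ by exists (A *m B *m Bg); rewrite eM; apply: lemL; rewrite hY
    | by exists (Bg *m B *m C); rewrite eM'; apply: lemR; rewrite hZ
    | by rewrite ?mul1mx ?mulmx1 ?mulmxA | by rewrite ?mul1mx ?mulmx1 ?mulmxA ].
- move=> Bg X [hB _] hX.
  have eM : A *m B *m C = A *m B *m Bg *m (B *m C)
    by rewrite !mulmxA (absorb _ hB).
  have eM' : A *m B *m C = A *m B *m (Bg *m B *m C)
    by rewrite !mulmxA (absorb _ hB).
  have [S hS] := Lstar (A *m B *m Bg); have [T hT] := Rstar (Bg *m B *m C).
  apply: (core (V:=ctr (A *m B *m Bg)) (U:=ctr (Bg *m B *m C)) _ _ _ _ hX);
    [ by exists S; rewrite eM; apply: lemL
    | by exists T; rewrite eM'; apply: lemR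
    | by rewrite ?mul1mx ?mulmx1 ?mulmxA | by rewrite ?mul1mx ?mulmx1 ?mulmxA ].
- move=> Y Z X [hY _] [hZ _] hX.
  have [T0 hT0] := Rstar B; have [S0 hS0] := Lstar B.
  have eM : A *m B *m C = A *m B *m ctr B *m (T0 *m C)
    by rewrite {1}hT0 !mulmxA.
  have eM' : A *m B *m C = A *m S0 *m (ctr B *m B *m C)
    by rewrite {1}hS0 !mulmxA.
  apply: (core (V:=Y) (U:=Z) _ _ _ _ hX);
    [ by exists (A *m B *m ctr B); rewrite eM; apply: lemL; rewrite hY
    | by exists (ctr B *m B *m C); rewrite eM'; apply: lemR; rewrite hZ
    | by rewrite ?mul1mx ?mulmx1 ?mulmxA | by rewrite ?mul1mx ?mulmx1 ?mulmxA ].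
- move=> X hX.
  have [T0 hT0] := Rstar B; have [S0 hS0] := Lstar B.
  have eM : A *m B *m C = A *m B *m ctr B *m (T0 *m C)
    by rewrite {1}hT0 !mulmxA.
  have eM' : A *m B *m C = A *m S0 *m (ctr B *m B *m C)
    by rewrite {1}hS0 !mulmxA.
  have [S hS] := Lstar (A *m B *m ctr B); have [T hT] := Rstar (ctr B *m B *m C).
  apply: (core (V:=ctr (A *m B *m ctr B)) (U:=ctr (ctr B *m B *m C)) _ _ _ _ hX);
    [ by exists S; rewrite eM; apply: lemL
    | by exists T; rewrite eM'; apply: lemR
    | by rewrite ?mul1mx ?mulmx1 ?mulmxA | by rewrite ?mul1mx ?mulmx1 ?mulmxA ].
Qed.
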